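(* Let $(T,s)$ be a signed tree that realizes a set $D$ of integers with $-1\notin D$. If $v$ is a vertex of $T$ with $sdeg(v)<0$, then $v$ is not a pendant vertex and $v$ is not adjacent to a limiting pendant vertex.
   Context: A signed tree is a pair $(T,s)$ where $T$ is a finite tree and $s:E(T)\to\{+,-\}$. The signed degree $sdeg(v)$ of a vertex is the number of incident positive edges minus the number of incident negative edges. $(T,s)$ realizes $D$ if $D=\{sdeg(v):v\in V(T)\}$. A pendant vertex is a vertex of degree $1$. A vertex of a tree $T$ is a limiting pendant vertex if it is an end vertex of some longest path of $T$. *)

(* Defs.v *)
From mathcomp Require Import all_boot all_order all_algebra.
Set Implicit Arguments. Unset Strict Implicit. Unset Printing Implicit Defensive.
Import GRing.Theory Num.Theory.

Definition simple_graph (V : finType) (e : rel V) : Prop :=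
  symmetric e /\ irreflexive e.

Definition has_cycle (V : finType) (e : rel V) : Prop :=
  exists c : seq V, 3 <= size c /\ ucycle e c.

(* A (finite) tree: connected acyclic simple graph (with at least one vertex,
   automatic once a vertex is given). *)
Definition is_tree (V : finType) (e : rel V) : Prop :=
  [/\ simple_graph e, (forall x y : V, connect e x y) & ~ has_cycle e].

(* Signing: a sign on each edge {u,w}, given as a function on 2-subsets;
   true = '+', false = '-'. *)
Definition signing (V : finType) := {set V} -> bool.

Definition pos_deg (V : finType) (e : rel V) (s : signing V) (v : V) : nat :=
  #|[set u | e v u && s [set v; u]]|.
Definition neg_deg (V : finType) (e : rel V) (s : signing V) (v : V) : nat :=
  #|[set u | e v u && ~~ s [set v; u]]|.

Definition sdeg (V : finType) (e : rel V) (s : signing V) (v : V) : int :=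
  (pos_deg e s v)%:Z - (neg_deg e s v)%:Z.

Definition realizes (V : finType) (e : rel V) (s : signing V) (D : pred int) : Prop :=
  forall d : int, d \in D <-> exists v : V, sdeg e s v = d.

Definition degree (V : finType) (e : rel V) (v : V) : nat := #|[set u | e v u]|.

Definition pendant (V : finType) (e : rel V) (v : V) : Prop := degree e v = 1%N.

(* A path x :: p : distinct vertices, consecutive ones adjacent;
   its length is size p (number of edges). *)
Definition is_gpath (V : finType) (e : rel V) (x : V) (p : seq V) : bool :=
  path e x p && uniq (x :: p).

Definition longest_path (V : finType) (e : rel V) (x : V) (p : seq V) : Prop :=
  is_gpath e x p /\ forall (y : V) (q : seq V), is_gpath e y q -> size q <= size p.

Definition limiting_pendant (V : finType) (e : rel V) (v : V) : Prop :=
  exists (x : V) (p : seq V), longest_path e x p /\ (v = x \/ v = last x p).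

(* Main.v *)
Require Import Defs.
From mathcomp Require Import all_boot all_order all_algebra.
Import GRing.Theory Num.Theory.
Local Open Scope ring_scope.

Section Aux.
Variables (V : finType) (e : rel V) (s : signing V).

Lemma nbr_set1 (y : V) : degree e y = 1%N -> exists t, [set r | e y r] = [set t].
Proof. by move=> H; apply/cards1P; rewrite /degree in H; rewrite H. Qed.

Lemma leaf_sdeg (y t : V) : [set r | e y r] = [set t] ->
  sdeg e s y = (if s [set y; t] then 1 else -1).
Proof.
move=> Hn.
have Ht r : e y r = (r == t).
  by have := congr1 (fun A : {set V} => r \in A) Hn; rewrite /= !inE.
rewrite /sdeg /pos_deg /neg_deg; case Hs: (s [set y; t]).
- have -> : [set u | e y u && s [set y; u]] = [set t].
    by apply/setP => r; rewrite !inE Ht; case: (eqVneq r t) => [->|_]; rewrite ?Hs.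
  have -> : [set u | e y u && ~~ s [set y; u]] = set0.
    by apply/setP => r; rewrite !inE Ht; case: (eqVneq r t) => [->|_]; rewrite ?Hs.
  by rewrite cards1 cards0.
- have -> : [set u | e y u && s [set y; u]] = set0.
    by apply/setP => r; rewrite !inE Ht; case: (eqVneq r t) => [->|_]; rewrite ?Hs.
  have -> : [set u | e y u && ~~ s [set y; u]] = [set t].
    by apply/setP => r; rewrite !inE Ht; case: (eqVneq r t) => [->|_]; rewrite ?Hs.
  by rewrite cards1 cards0.
Qed.

Hypothesis (Hs : simple_graph e) (Hc : ~ has_cycle e).

Lemma nbr_on_path x p z : is_gpath e x p -> e x z -> z \in p -> z = head x p.
Proof.
case/andP=> Hp Hu Hxz Hz; case/splitPr: Hz Hp Hu => p1 p2.
case: p1 => [//|a p1] Hp Hu.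
exfalso; apply: Hc; exists (x :: rcons (a :: p1) z); split.
  by rewrite /= size_rcons.
apply/andP; split.
- rewrite /cycle rcons_path last_rcons (proj1 Hs z x) Hxz andbT.
  by move: Hp; rewrite -cat_rcons cat_path => /andP[].
- have E : x :: (a :: p1) ++ z :: p2 = (x :: rcons (a :: p1) z) ++ p2.
    by rewrite -cat_rcons.
  by move: Hu; rewrite E cat_uniq => /andP[].
Qed.

Lemma longest_rev x p : longest_path e x p ->
  longest_path e (last x p) (rev (belast x p)).
Proof.
case=> /andP[Hp Hu] Hm; split.
- apply/andP; split.
  + rewrite rev_path; rewrite (eq_path (e' := e)) //.
    by move=> a b; rewrite /= (proj1 Hs).
  + by rewrite -rev_rcons rev_uniq -lastI.
- by move=> y q /Hm; rewrite size_rev size_belast.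
Qed.

Lemma main_leaf u p v : longest_path e u p -> e u v ->
  (forall y t, degree e y = 1%N -> e y t -> s [set y; t]) ->
  0 <= sdeg e s v.
Proof.
case=> Hg Hmax Huv Hleaf.
have sym a b : e a b = e b a by apply: (proj1 Hs).
have irr a : e a a = false by apply: (proj2 Hs).
have ext y q r : is_gpath e y q -> size q = size p -> e y r -> r \notin y :: q -> False.
  move=> /andP[H1 H2] Hsz Hyr Hr.
  have := Hmax r (y :: q); rewrite /is_gpath /= sym Hyr H1 Hr /=; rewrite -/(uniq (y :: q)) H2 Hsz ltnn.
  by move=> /(_ isT).
have endleaf y b q : is_gpath e y (b :: q) -> size q = (size p).-1 ->
    forall r, e y r -> r = b.
  move=> Hy Hsz r Hyr.
  case Hr: (r \in y :: b :: q).
    move: Hr; rewrite inE; case/orP => [/eqP Ery|Hr].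
      by rewrite Ery irr in Hyr.
    exact: (nbr_on_path _ _ _ Hy Hyr Hr).
  exfalso; apply: (ext _ _ r Hy) => //; last by rewrite Hr.
  rewrite /= Hsz prednK //.
  have := Hmax u [:: v]; rewrite /is_gpath /= Huv inE andbT.
  case: (eqVneq u v) => [Euv|_]; last by move/(_ isT).
  by rewrite Euv irr in Huv.
case: p Hg Hmax ext endleaf => [|a p'] Hg Hmax ext endleaf.
  have := Hmax u [:: v]; rewrite /is_gpath /= Huv inE andbT.
  case: (eqVneq u v) => [Euv|_]; last by move/(_ isT).
  by rewrite Euv irr in Huv.
have Hua := endleaf u a p' Hg erefl.
have Eva : v = a := Hua v Huv.
subst v.
have Hga : is_gpath e a p'.
  by move: Hg => /andP[/= /andP[_ H1] /andP[_ H2]]; apply/andP.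
have deg1 y : (forall r, e y r -> r = a) -> e y a -> degree e y = 1%N.
  move=> H Hya; rewrite /degree (_ : [set r | e y r] = [set a]) ?cards1 //.
  apply/setP => r; rewrite !inE; apply/idP/eqP => [/H //|->//].
have Hdu : degree e u = 1%N by apply: deg1 => //.
have Hsu : s [set a; u] by rewrite setUC; apply: Hleaf Hdu Huv.
have Hneg : [set r | e a r && ~~ s [set a; r]] \subset [set head a p'].
  apply/subsetP => t; rewrite !inE => /andP[Hat Hst].
  apply/eqP; case: (eqVneq t u) => [Etu|Ntu].
    by rewrite Etu Hsu in Hst.
  case: (eqVneq t (head a p')) => // Nth; exfalso.
  have Htp : t \notin a :: p'.
    rewrite inE negb_or; apply/andP; split.
      by apply/eqP => Eta; rewrite Eta irr in Hat.
    apply/negP => Htp; move/eqP: Nth; apply; exact: nbr_on_path _ _ _ Hga Hat Htp.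
  have Hgt : is_gpath e t (a :: p').
    move: Hga => /andP[H1 H2].
    by rewrite /is_gpath /= sym Hat H1 /= Htp.
  have Hdt : degree e t = 1%N.
    by apply: deg1; [exact: endleaf Hgt erefl | rewrite sym].
  have := Hleaf t a Hdt; rewrite sym Hat setUC => /(_ isT).
  by rewrite (negbTE Hst).
have Hpos : [set u] \subset [set r | e a r && s [set a; r]].
  by apply/subsetP => r; rewrite !inE => /eqP ->; rewrite sym Huv Hsu.
rewrite /sdeg subr_ge0 lez_nat /pos_deg /neg_deg.
apply: leq_trans (subset_leq_card Hneg) _.
by rewrite cards1 -(cards1 u) subset_leq_card.
Qed.

End Aux.

Theorem mainTheorem4 (V : finType) (e : rel V) (s : signing V) (D : pred int) :
  is_tree e -> realizes e s D -> (-1 \notin D) ->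
  forall v : V, sdeg e s v < 0 ->
    ~ pendant e v /\ ~ (exists u : V, e v u /\ limiting_pendant e u).
Proof.
case=> Hs _ Hc Hr HD v Hv.
have Hleaf y t : degree e y = 1%N -> e y t -> s [set y; t].
  case/nbr_set1 => t' Ht Hyt.
  have Et : t = t'.
    by have := congr1 (fun A : {set V} => t \in A) Ht; rewrite /= !inE Hyt => /esym/eqP.
  subst t'; case Hst: (s [set y; t]) => //.
  have := leaf_sdeg _ _ s _ _ Ht; rewrite Hst => Hy.
  by move: HD; rewrite (proj2 (Hr (-1)) (ex_intro _ y Hy)).
split.
- rewrite /pendant => /[dup] Hp /nbr_set1 [t Ht].
  have Hvt : e v t by have := congr1 (fun A : {set V} => t \in A) Ht; rewrite /= !inE eqxx.
  have := leaf_sdeg _ _ s _ _ Ht; rewrite (Hleaf _ _ Hp Hvt) => Ev.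
  by move: Hv; rewrite Ev.
- case=> u [Hvu [x [p [Hl [Eu|Eu]]]]]; subst u.
  + have H := main_leaf _ _ s Hs Hc _ _ _ Hl (etrans (proj1 Hs _ _) Hvu) Hleaf.
    by have := Order.POrderTheory.le_lt_trans H Hv; rewrite Order.POrderTheory.ltxx.
  + have H := main_leaf _ _ s Hs Hc _ _ _ (longest_rev _ _ Hs _ _ Hl)
      (etrans (proj1 Hs _ _) Hvu) Hleaf.
    by have := Order.POrderTheory.le_lt_trans H Hv; rewrite Order.POrderTheory.ltxx.
Qed.
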